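(* Let $k,\ell,n$ be integers with $2\le\ell<k/2$, $n\ge1$, and let $G_1$, $U_i$, $H_1^1$, $H_1^2$, $H_2$, $tr_1$ and $\min$ be as in the context. Let $s\ge1$ and let $P=(e,e_1,\dots,e_s,e')$ be an $(\ell,k)$-path (edges listed in order) all of whose edges lie in $H_1^1\cup H_1^2\cup H_2$, such that the set of edges of $P$ lying in $H_1^1$ is exactly $\{e,e'\}$. Then: (a) every edge of $P$ lying in $H_1^2$ belongs to $\{e_1,e_s\}$; (b) if both $e_1$ and $e_s$ lie in $H_1^2$ and $e_1\neq e_s$, then $s=2$; (c) for every $i=1,\dots,s$, $\min(e_i)\in tr_1(e)\cap tr_1(e')$.
   Context: Let $G_1$ be a graph on vertex set $[n]=\{1,\dots,n\}$. Let $\{A_i,B_i: i=1,\dots,2n\}$ be $4n$ pairwise disjoint finite sets with $|A_i|=2\lfloor k/2\rfloor+\ell$ for $1\le i\le n$ and $|A_i|=2k-2\ell-3$ for $n+1\le i\le 2n$; put $U_i=A_i\cup B_i$ and $V=\bigcup_{i=1}^{2n}U_i$. For $S\subseteq V$ let $tr(S)=\{i:S\cap U_i\ne\emptyset\}$, $tr_1(S)=tr(S)\cap[n]$, $\min(S)=\min tr(S)$. Define $H_1^1$ as the set of $k$-subsets $e\subseteq V$ such that for some edge $\{i,j\}$ of $G_1$, $tr_1(e)=\{i,j\}$, $|A_i\cap e|\ge\lfloor k/2\rfloor$ and $|A_j\cap e|\ge\lfloor k/2\rfloor$. Define $H_1^2$ as the set of $k$-subsets $e\subseteq V$ such that for some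 $i\in[n]$, $tr(e)=\{i,n+i\}$, $|A_i\cap e|=\ell+1$ and $|A_{n+i}\cap e|=k-\ell-1$. Let $H_2$ be the set of $k$-subsets $e\subseteq V$ with $|e\cap U_{\min(e)}|\ge k-\ell+1$. An $(\ell,k)$-path is a $k$-graph with distinct vertices $v_1,\dots,v_s$, $s\equiv\ell\pmod{k-\ell}$, $s\ge k$, and edges $\{v_{i(k-\ell)+1},\dots,v_{i(k-\ell)+k}\}$, $i=0,\dots,(s-k)/(k-\ell)$. *)

(* Defs.v *)
From mathcomp Require Import all_boot.
Set Implicit Arguments. Unset Strict Implicit. Unset Printing Implicit Defensive.

(* Model of the vertex set V: a finite type T (= V); every vertex lies in a
   unique part U_i, given by u : T -> 'I_(n+n) (0-based: part i of the paper
   is index i-1; the part "n+i" of the paper is rshift n (i-1)); the predicate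
   a marks the vertices lying in some A_i (so A_i = U_i ∩ a, B_i = U_i \ a). *)
Section Hypergraphs.
Variables (T : finType) (n : nat) (u : T -> 'I_(n + n)) (a : pred T).

Definition Aset (i : 'I_(n + n)) : {set T} := [set x | (u x == i) && a x].
Definition Uset (i : 'I_(n + n)) : {set T} := [set x | u x == i].

Definition tr (S : {set T}) : {set 'I_(n + n)} := [set u x | x in S].
Definition tr1 (S : {set T}) : {set 'I_n} := [set i : 'I_n | lshift n i \in tr S].
(* min(S) = min tr(S) (as a natural number; meaningful for nonempty S) *)
Definition mintr (S : {set T}) : nat := \big[minn/(n + n)]_(x in S) (u x : nat).

Variables (k l : nat) (G1 : rel 'I_n).

Definition inH11 (e : {set T}) : bool :=
  (#|e| == k) &&
  [exists i : 'I_n, exists j : 'I_n,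
     [&& G1 i j, tr1 e == [set i; j],
         k./2 <= #|e :&: Aset (lshift n i)| &
         k./2 <= #|e :&: Aset (lshift n j)| ]].

Definition inH12 (e : {set T}) : bool :=
  (#|e| == k) &&
  [exists i : 'I_n,
     [&& tr e == [set lshift n i; rshift n i],
         #|e :&: Aset (lshift n i)| == l.+1 &
         #|e :&: Aset (rshift n i)| == k - l - 1 ]].

Definition inH2 (e : {set T}) : bool :=
  (#|e| == k) && (k - l + 1 <= #|[set x in e | (u x : nat) == mintr e]|).

End Hypergraphs.

(* The t-th edge (t = 0,1,...) of the (l,k)-path with vertex sequence
   v_0, ..., v_(N-1) (0-based): {v_j | t(k-l) <= j < t(k-l)+k}. *)
Definition pedge (T : finType) (k l N : nat) (v : 'I_N -> T) (t : nat) : {set T} :=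
  [set v j | j : 'I_N & (t * (k - l) <= j) && (j < t * (k - l) + k)].

(* Main.v *)
Require Import Defs.
From mathcomp Require Import all_boot all_order zify.

Lemma mintr_le (T : finType) n (u : T -> 'I_(n+n)) (S : {set T}) x :
  x \in S -> mintr u S <= u x.
Proof.
move=> xS; rewrite /mintr -minEnat.
exact: (@Order.TotalTheory.bigmin_le_cond _ nat _ (n+n) x (fun y => y \in S) (fun y => nat_of_ord (u y))).
Qed.
Lemma mintr_ge (T : finType) n (u : T -> 'I_(n+n)) (S : {set T}) m :
  m < n + n -> (forall x, x \in S -> m <= u x) -> m <= mintr u S.
Proof.
move=> hm H; rewrite /mintr; apply: (big_ind (fun y => m <= y)) => //.
- exact: ltnW.
- by move=> p q hp hq; rewrite leq_min hp hq.
Qed.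

Lemma mintr_eq (T : finType) n (u : T -> 'I_(n+n)) (S : {set T}) x :
  x \in S -> (forall y, y \in S -> u x <= u y) -> mintr u S = u x.
Proof.
move=> xS H; apply/eqP; rewrite eqn_leq mintr_le //=.
by apply: mintr_ge.
Qed.

Lemma card_range N (lo hi : nat) :
  #|[set j : 'I_N | (lo <= j) && (j < hi)]| <= hi - lo.
Proof.
rewrite cardE -(size_map val) -(size_iota lo (hi - lo)).
apply: uniq_leq_size.
  by rewrite (map_inj_uniq val_inj) enum_uniq.
move=> x /mapP [j]; rewrite mem_enum inE => /andP [h1 h2] ->; move: h1 h2.
case: j => /= j hj h1 h2; rewrite mem_iota; apply/andP; split; lia.
Qed.

Lemma card_vrange (T : finType) N (v : 'I_N -> T) (lo hi : nat) :
  #|[set v j | j : 'I_N & (lo <= j) && (j < hi)]| <= hi - lo.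
Proof.
apply: leq_trans (leq_imset_card _ _) _.
apply: leq_trans (card_range N lo hi).
by apply: subset_leq_card; apply/subsetP => j; rewrite !inE.
Qed.

Lemma tr_mem (T : finType) n (u : T -> 'I_(n+n)) (S : {set T}) x :
  x \in S -> u x \in tr u S.
Proof. by move=> xS; apply: imset_f. Qed.

Lemma H12_facts (T : finType) n (u : T -> 'I_(n+n)) a k l (e : {set T}) :
  inH12 u a k l e -> #|e| = k /\ exists i : 'I_n, [/\ mintr u e = i,
    (forall x, x \in e -> u x %% n = i),
    #|e :&: Aset u a (lshift n i)| = l.+1 &
    #|e :&: Aset u a (rshift n i)| = k - l - 1].
Proof.
case/andP => /eqP hk /existsP [i /and3P [/eqP htr /eqP h1 /eqP h2]].
split => //; exists i.
have hx : forall x, x \in e -> (u x : nat) = i \/ (u x : nat) = n + i.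
  move=> x xe; have := @tr_mem _ _ u e x xe; rewrite htr !inE => /orP [] /eqP -> /=; by [left|right].
have hi := ltn_ord i.
split => //.
- have : lshift n i \in tr u e by rewrite htr !inE eqxx.
  case/imsetP => x xe hxe.
  have -> : (i : nat) = u x by rewrite -hxe.
  apply: mintr_eq => // y ye; rewrite -hxe /=.
  case: (hx y ye) => ->; lia.
- move=> x xe; case: (hx x xe) => ->; first by rewrite modn_small.
  by rewrite modnDl modn_small.
Qed.

Lemma H2_facts (T : finType) n (u : T -> 'I_(n+n)) k l (e : {set T}) :
  l < k -> inH2 u k l e -> [/\ #|e| = k,
    k - l + 1 <= #|[set x in e | (u x : nat) == mintr u e]| &
    exists2 x, x \in e & (u x : nat) = mintr u e].
Proof.
move=> hlk /andP [/eqP hk hc]; split => //.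
have : 0 < #|[set x in e | (u x : nat) == mintr u e]| by lia.
case/card_gt0P => x; rewrite inE => /andP [xe /eqP hx]; by exists x.
Qed.

Lemma H2_wit (T : finType) n (u : T -> 'I_(n+n)) k l (g f : {set T}) :
  l < k -> inH2 u k l g -> #|g :\: f| <= k - l ->
  exists2 w, w \in g :&: f & (u w : nat) = mintr u g.
Proof.
move=> hlk /(@H2_facts _ _ u k l g hlk) [_ hc _] hd.
case: (boolP [exists w, (w \in g :&: f) && ((u w : nat) == mintr u g)]).
  by case/existsP => w /andP [h /eqP]; exists w.
rewrite negb_exists => /forallP H.
have : [set x in g | (u x : nat) == mintr u g] \subset g :\: f.
  apply/subsetP => x; rewrite !inE => /andP [xg hx].
  have := H x; rewrite !inE xg hx andbT /= => ->; by [].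
move/subset_leq_card; lia.
Qed.

Lemma H11_facts (T : finType) n (u : T -> 'I_(n+n)) a k (G1 : rel 'I_n) (e : {set T}) :
  irreflexive G1 -> inH11 u a k G1 e -> #|e| = k /\ exists i j : 'I_n, [/\ i != j,
    (forall w, w \in e -> (u w : nat) < n -> (u w : nat) = i \/ (u w : nat) = j),
    k./2 <= #|e :&: Aset u a (lshift n i)|, k./2 <= #|e :&: Aset u a (lshift n j)| &
    (exists2 w, w \in e & u w = lshift n i) /\ (exists2 w, w \in e & u w = lshift n j)].
Proof.
move=> irr /andP [/eqP hk /existsP [i /existsP [j /and4P [hG /eqP htr h1 h2]]]].
split => //; exists i, j; split => //.
- by apply/eqP => hij; move: hG; rewrite hij irr.
- move=> w we hw.
  have : Ordinal hw \in tr1 u e.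
    rewrite /tr1 inE.
    have -> : lshift n (Ordinal hw) = u w by apply: val_inj.
    exact: imset_f.
  by rewrite htr !inE => /orP [] /eqP/(congr1 val) /= ->; [left|right].
- split.
  + have : i \in tr1 u e by rewrite htr !inE eqxx.
    by rewrite /tr1 inE => /imsetP [w we hw]; exists w.
  + have : j \in tr1 u e by rewrite htr !inE eqxx orbT.
    by rewrite /tr1 inE => /imsetP [w we hw]; exists w.
Qed.

Lemma card3 (T : finType) (X A B C : {set T}) :
  A \subset X -> B \subset X -> C \subset X ->
  (forall z, z \in A -> z \in B -> False) ->
  (forall z, z \in A -> z \in C -> False) ->
  (forall z, z \in B -> z \in C -> False) ->
  #|A| + #|B| + #|C| <= #|X|.
Proof.
move=> hA hB hC dAB dAC dBC.
have e1 : A :&: B = set0.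
  by apply/setP => z; rewrite !inE; apply/negP => /andP [p q]; apply: (dAB z).
have e2 : (A :|: B) :&: C = set0.
  apply/setP => z; rewrite !inE; apply/negP => /andP [/orP [p|p] q].
  - exact: (dAC z). - exact: (dBC z).
have : #|A :|: B :|: C| <= #|X|.
  by apply: subset_leq_card; rewrite !subUset hA hB hC.
by rewrite cardsU e2 cards0 subn0 cardsU e1 cards0 subn0.
Qed.

Lemma boundary (T : finType) n (u : T -> 'I_(n+n)) a k l (G1 : rel 'I_n) (e g : {set T}) x y :
  irreflexive G1 -> l < k -> inH11 u a k G1 e -> inH12 u a k l g || inH2 u k l g ->
  x != y -> x \in e :&: g -> y \in e :&: g -> #|g :\: e| <= k - l ->
  mintr u g < n /\ exists2 w, w \in e & (u w : nat) = mintr u g.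
Proof.
move=> irr hlk h11 hg xy hx hy hd.
case: (@H11_facts _ _ u a k G1 e irr h11) => hk [i [j [ij hw hi hj _]]].
have hk2 : k./2 + k./2 <= k by have := odd_double_half k; rewrite -addnn; lia.
have [w' w'eg hw'] : exists2 w', w' \in e :&: g & (u w' : nat) < n.
  case: (ltnP (u x) n) => hxn; first by exists x.
  case: (ltnP (u y) n) => hyn; first by exists y.
  exfalso.
  have hxe : x \in e by move: hx; rewrite inE => /andP [].
  have hye : y \in e by move: hy; rewrite inE => /andP [].
  have := @card3 _ e (e :&: Aset u a (lshift n i)) (e :&: Aset u a (lshift n j)) [set x; y].
  rewrite cards2 xy.
  have hAi0 : forall (i0 : 'I_n) z, z \in Aset u a (lshift n i0) -> u z = lshift n i0.
    by move=> i0 z; rewrite inE => /andP [/eqP].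
  have hin : forall z, z \in [set x; y] -> n <= u z.
    by move=> z; rewrite !inE => /orP [] /eqP ->.
  have lti : forall i0 : 'I_n, (lshift n i0 : nat) < n by move=> i0 /=.
  move/(_ (subsetIl _ _) (subsetIl _ _)).
  have -> : [set x; y] \subset e by apply/subsetP => z; rewrite !inE => /orP [] /eqP ->.
  move/(_ isT).
  have H1 : forall z, z \in e :&: Aset u a (lshift n i) -> z \in e :&: Aset u a (lshift n j) -> False.
    move=> z; rewrite inE => /andP [_ /hAi0 p]; rewrite inE => /andP [_ /hAi0 q].
    by move/eqP: ij; apply; apply: (@lshift_inj n n); rewrite -p -q.
  move/(_ H1).
  have H2 : forall i0 : 'I_n, forall z, z \in e :&: Aset u a (lshift n i0) -> z \in [set x; y] -> False.
    move=> i0 z; rewrite inE => /andP [_ /hAi0 p] /hin; rewrite p /=.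
    by rewrite leqNgt ltn_ord.
  move/(_ (H2 i) (H2 j)); lia.
have w'e : w' \in e by move: w'eg; rewrite inE => /andP [].
have w'g : w' \in g by move: w'eg; rewrite inE => /andP [].
case/orP: hg => hg.
- case: (@H12_facts _ _ u a k l g hg) => _ [i0 [hm hres _ _]].
  have := hres w' w'g; rewrite modn_small // => hw0.
  rewrite hm; split; first by apply: ltn_ord.
  by exists w' => //; rewrite hw0.
- have := @mintr_le _ _ u g w' w'g => hle.
  split; first by lia.
  have [w] := @H2_wit _ _ u k l g e hlk hg hd.
  rewrite inE => /andP [_ we] hw2; by exists w.
Qed.

Lemma respair (T : finType) n (u : T -> 'I_(n+n)) a k l (f g : {set T}) x :
  l < k -> inH12 u a k l f || inH2 u k l f -> inH12 u a k l g || inH2 u k l g ->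
  x \in f :&: g -> #|f :\: g| <= k - l -> #|g :\: f| <= k - l ->
  mintr u f %% n = mintr u g %% n /\
  (inH2 u k l f -> inH2 u k l g -> mintr u f = mintr u g).
Proof.
move=> hlk hf hg hx hfg hgf.
have xf : x \in f by move: hx; rewrite inE => /andP [].
have xg : x \in g by move: hx; rewrite inE => /andP [].
have E2 : inH2 u k l f -> inH2 u k l g -> mintr u f = mintr u g.
  move=> h2f h2g.
  have [wf] := @H2_wit _ _ u k l f g hlk h2f hfg.
  rewrite inE => /andP [wff wfg] hwf.
  have [wg] := @H2_wit _ _ u k l g f hlk h2g hgf.
  rewrite inE => /andP [wgg wgf] hwg.
  have := @mintr_le _ _ u g wf wfg; have := @mintr_le _ _ u f wg wgf; lia.
split => //.
case/orP: hf => hf.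
- case: (@H12_facts _ _ u a k l f hf) => _ [i [hmi hri _ _]].
  case/orP: hg => hg.
  + case: (@H12_facts _ _ u a k l g hg) => _ [j [hmj hrj _ _]].
    by rewrite hmi hmj -(hri x xf) -(hrj x xg).
  + have [wg] := @H2_wit _ _ u k l g f hlk hg hgf.
    rewrite inE => /andP [wgg wgf] hwg.
    by rewrite -hwg (hri wg wgf) hmi modn_small.
- case/orP: hg => hg.
  + case: (@H12_facts _ _ u a k l g hg) => _ [j [hmj hrj _ _]].
    have [wf] := @H2_wit _ _ u k l f g hlk hf hfg.
    rewrite inE => /andP [wff wfg] hwf.
    by rewrite -hwf (hrj wf wfg) hmj modn_small.
  + by rewrite E2.
Qed.

Lemma pedge_mem (T : finType) k l N (v : 'I_N -> T) t (j : 'I_N) :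
  t * (k - l) <= j -> j < t * (k - l) + k -> v j \in pedge k l v t.
Proof. by move=> h1 h2; apply/imsetP; exists j => //; rewrite inE h1 h2. Qed.

Lemma pedge_inv (T : finType) k l N (v : 'I_N -> T) t x :
  x \in pedge k l v t -> exists j : 'I_N, [/\ x = v j, t * (k - l) <= j & j < t * (k - l) + k].
Proof. by case/imsetP => j; rewrite inE => /andP [h1 h2] ->; exists j. Qed.

Lemma pedge_disj (T : finType) k l N (v : 'I_N -> T) t t' x :
  injective v -> 2 * l < k -> t.+2 <= t' ->
  x \in pedge k l v t -> x \in pedge k l v t' -> False.
Proof.
move=> inj hlk htt /pedge_inv [j [-> h1 h2]] /pedge_inv [j' [/inj <- h3 h4]].
have := leq_mul htt (leqnn (k - l)); rewrite !mulSn; lia.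
Qed.

Lemma pedge_diff1 (T : finType) k l N (v : 'I_N -> T) t :
  #|pedge k l v t :\: pedge k l v t.+1| <= k - l.
Proof.
have := @card_vrange _ _ v (t * (k - l)) (t.+1 * (k - l)).
have -> : t.+1 * (k - l) - t * (k - l) = k - l by rewrite mulSn; lia.
apply: leq_trans; apply: subset_leq_card; apply/subsetP => x.
rewrite inE => /andP [hn /pedge_inv [j [hx h1 h2]]].
apply/imsetP; exists j => //; rewrite inE h1 /=.
rewrite ltnNge; apply/negP => h3; move/negP: hn; apply.
rewrite hx; apply: pedge_mem => //; rewrite mulSn in h3 *; lia.
Qed.

Lemma pedge_diff2 (T : finType) k l N (v : 'I_N -> T) t :
  l <= k -> #|pedge k l v t.+1 :\: pedge k l v t| <= k - l.
Proof.
move=> hlk.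
have := @card_vrange _ _ v (t * (k - l) + k) (t.+1 * (k - l) + k).
have -> : t.+1 * (k - l) + k - (t * (k - l) + k) = k - l by rewrite mulSn; lia.
apply: leq_trans; apply: subset_leq_card; apply/subsetP => x.
rewrite inE => /andP [hn /pedge_inv [j [hx h1 h2]]].
apply/imsetP; exists j => //; rewrite inE h2 andbT.
rewrite leqNgt; apply/negP => h3; move/negP: hn; apply.
rewrite hx; apply: pedge_mem => //; rewrite mulSn in h1 *; lia.
Qed.

Lemma pedge_two (T : finType) k l N (v : 'I_N -> T) t :
  injective v -> 2 <= l -> l < k -> t.+1 * (k - l) + k <= N ->
  exists x y, [/\ x != y, x \in pedge k l v t :&: pedge k l v t.+1 &
                          y \in pedge k l v t :&: pedge k l v t.+1].
Proof.
move=> inj hl hlk hN.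
have hx : t.+1 * (k - l) < N by lia.
have hy : t.+1 * (k - l) + 1 < N by lia.
exists (v (Ordinal hx)), (v (Ordinal hy)); split.
- by apply/eqP => /inj /(congr1 val) /=; lia.
- rewrite inE; apply/andP; split; apply: pedge_mem => /=; rewrite ?mulSn in hN *; lia.
- rewrite inE; apply/andP; split; apply: pedge_mem => /=; rewrite ?mulSn in hN *; lia.
Qed.

Lemma pedge_neq (T : finType) k l N (v : 'I_N -> T) t t' :
  injective v -> l < k -> t < t' -> t * (k - l) < N -> pedge k l v t != pedge k l v t'.
Proof.
move=> inj hlk htt hN; apply/eqP => heq.
have : v (Ordinal hN) \in pedge k l v t by apply: pedge_mem => /=; lia.
rewrite heq => /pedge_inv [j [/inj /(congr1 val) /= h1 h2 h3]].
have := leq_mul htt (leqnn (k - l)); rewrite mulSn; lia.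
Qed.

Theorem proposition3p4
  (k l n s : nat) (T : finType) (u : T -> 'I_(n + n)) (a : pred T)
  (G1 : rel 'I_n)
  (hl : 2 <= l) (hlk : 2 * l < k) (hn : 1 <= n)
  (G1sym : symmetric G1) (G1irr : irreflexive G1)
  (hA1 : forall i : 'I_n, #|Aset u a (lshift n i)| = 2 * k./2 + l)
  (hA2 : forall i : 'I_n, #|Aset u a (rshift n i)| = 2 * k - 2 * l - 3)
  (hs : 1 <= s)
  (v : 'I_(l + (s + 2) * (k - l)) -> T) (hv : injective v)
  (hH : forall t, t <= s.+1 ->
          [|| inH11 u a k G1 (pedge k l v t),
              inH12 u a k l (pedge k l v t)
            | inH2 u k l (pedge k l v t)])
  (hH11 : forall t, t <= s.+1 ->
          inH11 u a k G1 (pedge k l v t) =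
          (pedge k l v t == pedge k l v 0) || (pedge k l v t == pedge k l v s.+1)) :
  (forall t, t <= s.+1 -> inH12 u a k l (pedge k l v t) ->
      pedge k l v t = pedge k l v 1 \/ pedge k l v t = pedge k l v s)
  /\ (inH12 u a k l (pedge k l v 1) -> inH12 u a k l (pedge k l v s) ->
      pedge k l v 1 <> pedge k l v s -> s = 2)
  /\ (forall t, 1 <= t <= s ->
      exists2 j : 'I_n, mintr u (pedge k l v t) = j &
        j \in tr1 u (pedge k l v 0) :&: tr1 u (pedge k l v s.+1)).
Proof.
have hlk' : l < k by lia.
have hidx : forall t, t <= s.+1 -> t * (k - l) + k <= l + (s + 2) * (k - l).
  move=> t ht; have := leq_mul ht (leqnn (k - l)).
  rewrite addn2 !mulSn; lia.
have H0 : inH11 u a k G1 (pedge k l v 0) by rewrite hH11 // eqxx.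
have Hs1 : inH11 u a k G1 (pedge k l v s.+1) by rewrite hH11 // eqxx orbT.
have Hmid : forall t, 1 <= t <= s ->
    inH12 u a k l (pedge k l v t) || inH2 u k l (pedge k l v t).
  move=> t /andP [h1 h2].
  have := hH t (leqW h2); rewrite hH11 ?(leqW h2) //.
  have n0 : pedge k l v t != pedge k l v 0.
    rewrite eq_sym; apply: pedge_neq => //; have := hidx 0 isT; lia.
  have n1 : pedge k l v t != pedge k l v s.+1.
    apply: pedge_neq => //; have := hidx t (leqW h2); lia.
  by rewrite (negbTE n0) (negbTE n1).
have [hM1 [w0 w0e hw0]] : mintr u (pedge k l v 1) < n /\
    exists2 w, w \in pedge k l v 0 & (u w : nat) = mintr u (pedge k l v 1).
  have [x [y [xy hx hy]]] := @pedge_two _ k l _ v 0 hv hl hlk' (hidx 1 isT).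
  apply: (@boundary _ _ u a k l G1 _ _ x y) => //.
  - by apply: Hmid; rewrite leqnn hs.
  - exact: (@pedge_diff2 _ k l _ v 0 (ltnW hlk')).
have [hMs [w1 w1e hw1]] : mintr u (pedge k l v s) < n /\
    exists2 w, w \in pedge k l v s.+1 & (u w : nat) = mintr u (pedge k l v s).
  have [x [y [xy hx hy]]] := @pedge_two _ k l _ v s hv hl hlk' (hidx s.+1 (leqnn _)).
  apply: (@boundary _ _ u a k l G1 _ _ x y) => //.
  - by apply: Hmid; rewrite leqnn hs.
  - by rewrite setIC.
  - by rewrite setIC.
  - exact: (@pedge_diff1 _ k l _ v s).
set r := mintr u (pedge k l v 1) in hM1 hw0.
have hres : forall t, 1 <= t <= s -> mintr u (pedge k l v t) %% n = r.
  elim=> [|t IH] //; case: (posnP t) => [-> _|ht]; first by rewrite modn_small.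
  move=> /andP [_ hts].
  have h1 : 1 <= t <= s by rewrite ht ltnW.
  have h2 : 1 <= t.+1 <= s by rewrite hts.
  rewrite -(IH h1).
  have [x [y [xy hx hy]]] := @pedge_two _ k l _ v t hv hl hlk' (hidx t.+1 (leqW hts)).
  have [h _] := @respair _ _ u a k l _ _ x hlk' (Hmid t h1) (Hmid t.+1 h2) hx
     (@pedge_diff1 _ k l _ v t) (@pedge_diff2 _ k l _ v t (ltnW hlk')).
  by rewrite h.
have hMsr : mintr u (pedge k l v s) = r.
  by rewrite -(modn_small hMs) hres // leqnn hs.
have hdich : forall t, 1 <= t <= s ->
    mintr u (pedge k l v t) = r \/ mintr u (pedge k l v t) = n + r.
  move=> t ht.
  have hlt : mintr u (pedge k l v t) < n + n.
    case/orP: (Hmid t ht) => h.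
    - case: (@H12_facts _ _ u a k l _ h) => _ [i [-> _ _ _]]; have := ltn_ord i; lia.
    - case: (@H2_facts _ _ u k l _ hlk' h) => _ _ [x _ <-]; exact: ltn_ord.
  have := divn_eq (mintr u (pedge k l v t)) n; rewrite hres //.
  have : mintr u (pedge k l v t) %/ n < 2 by rewrite ltn_divLR //; lia.
  move: (_ %/ n) => q; case: q => [|[|q]] // _ ->; [left|right]; lia.
have eq2 : forall t, 1 <= t -> t.+1 <= s -> inH2 u k l (pedge k l v t) ->
    inH2 u k l (pedge k l v t.+1) -> mintr u (pedge k l v t) = mintr u (pedge k l v t.+1).
  move=> t h1 hts p q.
  have h1' : 1 <= t <= s by rewrite h1 ltnW.
  have h2 : 1 <= t.+1 <= s by rewrite hts.
  have [x [y [xy hx hy]]] := @pedge_two _ k l _ v t hv hl hlk' (hidx t.+1 (leqW hts)).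
  have [_ h] := @respair _ _ u a k l _ _ x hlk' (Hmid t h1') (Hmid t.+1 h2) hx
     (@pedge_diff1 _ k l _ v t) (@pedge_diff2 _ k l _ v t (ltnW hlk')).
  exact: h.
have isH2 : forall t, 1 <= t <= s -> mintr u (pedge k l v t) = n + r ->
    inH2 u k l (pedge k l v t).
  move=> t ht hm; case/orP: (Hmid t ht) => // h; exfalso.
  case: (@H12_facts _ _ u a k l _ h) => _ [i [hi _ _ _]]; have := ltn_ord i; lia.
pose j : 'I_n := Ordinal hM1.
have mkR : forall t, inH12 u a k l (pedge k l v t) -> mintr u (pedge k l v t) = r ->
    #|pedge k l v t :&: Aset u a (lshift n j)| = l.+1 /\
    #|pedge k l v t :&: Aset u a (rshift n j)| = k - l - 1.
  move=> t h hm; case: (@H12_facts _ _ u a k l _ h) => _ [i [hi _ h1 h2]].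
  have -> : j = i by apply: val_inj; rewrite /= -hi hm.
  by split.
have cntR : forall t t', t.+2 <= t' -> inH12 u a k l (pedge k l v t) ->
    inH12 u a k l (pedge k l v t') -> mintr u (pedge k l v t) = r ->
    mintr u (pedge k l v t') = r -> False.
  move=> t t' htt p q hp hq.
  have [_ c1] := mkR t p hp; have [_ c2] := mkR t' q hq.
  have := @card3 _ (Aset u a (rshift n j)) (pedge k l v t :&: Aset u a (rshift n j))
     (pedge k l v t' :&: Aset u a (rshift n j)) set0 (subsetIr _ _) (subsetIr _ _) (sub0set _).
  have D : forall z, z \in pedge k l v t :&: Aset u a (rshift n j) ->
      z \in pedge k l v t' :&: Aset u a (rshift n j) -> False.
    move=> z /setIP [pz _] /setIP [qz _]; exact: (@pedge_disj _ k l _ v t t' z hv hlk htt pz qz).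
  move/(_ D (fun z _ => ltac:(by rewrite inE)) (fun z _ => ltac:(by rewrite inE))).
  rewrite c1 c2 cards0 hA2; lia.
have allr : forall t, 1 <= t <= s -> mintr u (pedge k l v t) = r.
  suff : ~ exists t, (1 <= t <= s) && (mintr u (pedge k l v t) != r).
    move=> H t ht; apply/eqP/negPn/negP => hne; apply: H; exists t; by rewrite ht hne.
  move=> ex; case: (ex_minnP ex) => t /andP [ht hne] tmin.
  have hMt : mintr u (pedge k l v t) = n + r.
    by case: (hdich t ht) => // h; rewrite h eqxx in hne.
  have p2 := isH2 t ht hMt.
  case/andP: ht => ht1 hts.
  case: t ht1 hts hne tmin hMt p2 => [//|t0] ht1 hts hne tmin hMt p2.
  have ht0 : 1 <= t0.
    case: (posnP t0) => // ht0; subst t0; exfalso; move: hMt; rewrite -/r; lia.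
  have hM0 : mintr u (pedge k l v t0) = r.
    apply/eqP; apply/negPn/negP => h.
    have X : (1 <= t0 <= s) && (mintr u (pedge k l v t0) != r) by rewrite ht0 (ltnW hts) h.
    have := tmin t0 X; lia.
  have p0 : inH12 u a k l (pedge k l v t0).
    have X : 1 <= t0 <= s by rewrite ht0 (ltnW hts).
    case/orP: (Hmid t0 X) => // h; exfalso; have := eq2 t0 ht0 hts h p2; lia.
  have ex2 : exists t', (t0.+1 < t' <= s) && (mintr u (pedge k l v t') == r).
    exists s; rewrite leqnn hMsr eqxx !andbT ltn_neqAle hts andbT.
    by apply/eqP => hs'; move: hMt; rewrite hs' hMsr; lia.
  case: (ex_minnP ex2) => t1 /andP [/andP [h1 h2] /eqP hM1'] tmin2.
  case: t1 h1 h2 hM1' tmin2 => [//|t2] h1 h2 hM1' tmin2.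
  have X2 : 1 <= t2 <= s by apply/andP; split; lia.
  have hM2 : mintr u (pedge k l v t2) = n + r.
    case: (hdich t2 X2) => // h; exfalso.
    case: (ltngtP t0.+1 t2) => h3.
    - have Y : (t0.+1 < t2 <= s) && (mintr u (pedge k l v t2) == r)
        by rewrite h3 h eqxx ltnW.
      have := tmin2 t2 Y; lia.
    - lia.
    - by move: hMt; rewrite h3 h; lia.
  have q2 := isH2 t2 X2 hM2.
  have q1 : inH12 u a k l (pedge k l v t2.+1).
    have X : 1 <= t2.+1 <= s by rewrite h2.
    case/orP: (Hmid _ X) => // h; exfalso.
    have := eq2 t2 (proj1 (andP X2)) h2 q2 h; lia.
  apply: (cntR t0 t2.+1 _ p0 q1 hM0 hM1'); lia.
have excl : forall e, inH11 u a k G1 e -> inH12 u a k l e -> False.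
  move=> e p q.
  case: (@H11_facts _ _ u a k G1 e G1irr p) => _ [i [i' [ii _ _ _ [[wa wae hwa] [wb wbe hwb]]]]].
  case: (@H12_facts _ _ u a k l e q) => _ [c [_ hr _ _]].
  have := hr wa wae; have := hr wb wbe; rewrite hwa hwb /= !modn_small // => e1 e2.
  by move/eqP: ii; apply; apply: ord_inj; lia.
have H11cnt : forall e, inH11 u a k G1 e -> (exists2 w, w \in e & (u w : nat) = r) ->
    k./2 <= #|e :&: Aset u a (lshift n j)|.
  move=> e p [w we hw].
  case: (@H11_facts _ _ u a k G1 e G1irr p) => _ [i [i' [_ H hi hi' _]]].
  have hwn : (u w : nat) < n by rewrite hw.
  case: (H w we hwn) => h.
  - have -> : j = i by apply: ord_inj => /=; lia.
    exact: hi.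
  - have -> : j = i' by apply: ord_inj => /=; lia.
    exact: hi'.
have cntL : forall t, 2 <= t -> t.+1 <= s -> inH12 u a k l (pedge k l v t) -> False.
  move=> t h2 hts p.
  have [c1 _] := mkR t p (allr t ltac:(apply/andP; split; lia)).
  have c0 := H11cnt _ H0 (ex_intro2 _ _ w0 w0e hw0).
  have cs : k./2 <= #|pedge k l v s.+1 :&: Aset u a (lshift n j)|.
    by apply: H11cnt => //; exists w1 => //; rewrite hw1 hMsr.
  have := @card3 _ (Aset u a (lshift n j)) (pedge k l v 0 :&: Aset u a (lshift n j))
     (pedge k l v t :&: Aset u a (lshift n j)) (pedge k l v s.+1 :&: Aset u a (lshift n j))
     (subsetIr _ _) (subsetIr _ _) (subsetIr _ _).
  have D : forall t1 t2, t1.+2 <= t2 -> forall z, z \in pedge k l v t1 :&: Aset u a (lshift n j) ->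
      z \in pedge k l v t2 :&: Aset u a (lshift n j) -> False.
    move=> t1 t2 htt z /setIP [pz _] /setIP [qz _].
    exact: (@pedge_disj _ k l _ v t1 t2 z hv hlk htt pz qz).
  move/(_ (D 0 t h2) (D 0 s.+1 ltac:(lia)) (D t s.+1 ltac:(lia))).
  rewrite hA1 c1; lia.
split; [|split].
- move=> t ht hp.
  have [t0|/eqP t0] := eqVneq t 0; first by exfalso; rewrite t0 in hp; exact: (excl _ H0 hp).
  have [ts1|/eqP ts1] := eqVneq t s.+1; first by exfalso; rewrite ts1 in hp; exact: (excl _ Hs1 hp).
  have [->|/eqP t1] := eqVneq t 1; first by left.
  have [->|/eqP tss] := eqVneq t s; first by right.
  exfalso; apply: (cntL t _ _ hp); lia.
- move=> p q hne.
  have [hs1|hs2] : s = 1 \/ 2 <= s by lia.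
  + by exfalso; apply: hne; exact: (congr1 (pedge k l v) (esym hs1)).
  have [//|hs3] : s = 2 \/ 3 <= s by lia.
  exfalso; apply: (cntR 1 s hs3 p q (allr 1 _) (allr s _)).
  + by rewrite leqnn hs.
  + by rewrite leqnn hs.
- move=> t ht; exists j; first by rewrite allr.
  rewrite inE; apply/andP; split; rewrite /tr1 inE; apply/imsetP.
  + by exists w0 => //; apply: ord_inj; rewrite /= hw0.
  + by exists w1 => //; apply: ord_inj; rewrite /= hw1 hMsr.
Qed.
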